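(* Let $\mathcal{M}$ be a small $n$-abelian category, let $M\in(\mathcal{M},\mathcal{G})$ be a mono functor and let $M\hookrightarrow E$ be an essential extension of $M$ in $(\mathcal{M},\mathcal{G})$. Then $E$ is a mono functor.
   Context: $\mathcal{G}$ is the category of abelian groups and $(\mathcal{M},\mathcal{G})$ the abelian category of additive covariant functors $\mathcal{M}\to\mathcal{G}$. A functor $F\in(\mathcal{M},\mathcal{G})$ is a mono functor if $F(f)$ is injective for every monomorphism $f$ of $\mathcal{M}$. A monomorphism $A\to B$ is an essential extension if for every nonzero monomorphism $B'\to B$ the images of $A\to B$ and $B'\to B$ have nonzero intersection. An $n$-abelian category is an idempotent complete additive category in which every morphism has an $n$-kernel and an $n$-cokernel, and in which every monomorphism (resp. epimorphism) together with any of its $n$-cokernels (resp. $n$-kernels) forms an $n$-exact sequence. *)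

(* Defs.v *)
From HB Require Import structures.
From mathcomp Require Import all_boot all_algebra.
Set Implicit Arguments. Unset Strict Implicit. Unset Printing Implicit Defensive.
Import GRing.Theory.
Local Open Scope ring_scope.

(* ---------- Preadditive categories (Ab-enriched), composition written
   in diagrammatic order: comp f g = g o f. ---------- *)
Record precat := PreCat {
  Ob : Type;
  Hom : Ob -> Ob -> zmodType;
  idm : forall A, Hom A A;
  comp : forall A B D, Hom A B -> Hom B D -> Hom A D;
  compA : forall A B D E (f : Hom A B) (g : Hom B D) (h : Hom D E),
      comp f (comp g h) = comp (comp f g) h;
  comp1m : forall A B (f : Hom A B), comp (idm A) f = f;
  compm1 : forall A B (f : Hom A B), comp f (idm B) = f;
  compDl : forall A B D (f f' : Hom A B) (g : Hom B D),
      comp (f + f') g = comp f g + comp f' g;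
  compDr : forall A B D (f : Hom A B) (g g' : Hom B D),
      comp f (g + g') = comp f g + comp f g'
}.
Arguments Hom : clear implicits.
Arguments idm {_} A.
Arguments comp {_ A B D} f g.

Definition opcat (C : precat) : precat :=
  @PreCat (Ob C) (fun A B => Hom C B A) (@idm C)
    (fun A B D f g => comp g f)
    (fun A B D E f g h => esym (compA h g f))
    (fun A B f => compm1 f)
    (fun A B f => comp1m f)
    (fun A B D f f' g => compDr g f f')
    (fun A B D f g g' => compDl g g' f).

Unset Implicit Arguments.
Section Cat.
Variable C : precat.

Definition is_mono {A B : Ob C} (f : Hom C A B) : Prop :=
  forall Y (g h : Hom C Y A), comp g f = comp h f -> g = h.

Definition is_additive : Prop :=
  (exists Z : Ob C, idm Z = 0) /\
  forall A B : Ob C, exists (P : Ob C) (i1 : Hom C A P) (i2 : Hom C B P)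
                            (p1 : Hom C P A) (p2 : Hom C P B),
    [/\ comp i1 p1 = idm A, comp i2 p2 = idm B,
        comp i1 p2 = 0, comp i2 p1 = 0 &
        comp p1 i1 + comp p2 i2 = idm P].

Definition idempotent_complete : Prop :=
  forall (A : Ob C) (e : Hom C A A), comp e e = e ->
    exists (B : Ob C) (r : Hom C A B) (s : Hom C B A),
      comp r s = e /\ comp s r = idm B.

(* A sequence X^0 -> X^1 -> X^2 -> ... (only X^0 .. X^{n+1} matter). *)
(* (d^1,...,d^n) is an n-cokernel of d^0: for every Y the sequence
   0 -> C(X^{n+1},Y) -> C(X^n,Y) -> ... -> C(X^1,Y) -> C(X^0,Y) is exact. *)
Definition is_ncoker (n : nat) (X : nat -> Ob C)
    (d : forall k, Hom C (X k) (X k.+1)) : Prop :=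
  (forall k, (k < n)%N -> comp (d k) (d k.+1) = 0) /\
  forall Y : Ob C,
    (forall g : Hom C (X n.+1) Y, comp (d n) g = 0 -> g = 0) /\
    (forall k, (k < n)%N -> forall g : Hom C (X k.+1) Y,
        comp (d k) g = 0 -> exists h : Hom C (X k.+2) Y, g = comp (d k.+1) h).

(* (d^0,...,d^{n-1}) is an n-kernel of d^n: for every Y the sequence
   0 -> C(Y,X^0) -> C(Y,X^1) -> ... -> C(Y,X^{n+1}) is exact. *)
Definition is_nker (n : nat) (X : nat -> Ob C)
    (d : forall k, Hom C (X k) (X k.+1)) : Prop :=
  (forall k, (k < n)%N -> comp (d k) (d k.+1) = 0) /\
  forall Y : Ob C,
    (forall g : Hom C Y (X 0), comp g (d 0) = 0 -> g = 0) /\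
    (forall k, (k < n)%N -> forall g : Hom C Y (X k.+1),
        comp g (d k.+1) = 0 -> exists h : Hom C Y (X k), g = comp h (d k)).

Definition is_nexact (n : nat) (X : nat -> Ob C)
    (d : forall k, Hom C (X k) (X k.+1)) : Prop :=
  is_ncoker n X d /\ is_nker n X d.

Definition cobj (A B : Ob C) (Y : nat -> Ob C) (k : nat) : Ob C :=
  match k with 0 => A | 1 => B | (j.+2)%N => Y j end.

Definition cmor {A B : Ob C} (f : Hom C A B) {Y : nat -> Ob C}
    (e0 : Hom C B (Y 0)) (e : forall j, Hom C (Y j) (Y j.+1)) :
    forall k, Hom C (cobj A B Y k) (cobj A B Y k.+1) :=
  fun k => match k as k0 return Hom C (cobj A B Y k0) (cobj A B Y k0.+1) with
           | 0 => f | 1 => e0 | (j.+2)%N => e j end.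

Definition has_ncokernels (n : nat) : Prop :=
  forall (A B : Ob C) (f : Hom C A B),
    exists (Y : nat -> Ob C) (e0 : Hom C B (Y 0)) (e : forall j, Hom C (Y j) (Y j.+1)),
      is_ncoker n (cobj A B Y) (cmor f e0 e).

Definition mono_ncoker_exact (n : nat) : Prop :=
  forall (A B : Ob C) (f : Hom C A B), is_mono f ->
    forall (Y : nat -> Ob C) (e0 : Hom C B (Y 0)) (e : forall j, Hom C (Y j) (Y j.+1)),
      is_ncoker n (cobj A B Y) (cmor f e0 e) ->
      is_nexact n (cobj A B Y) (cmor f e0 e).
End Cat.

(* n-abelian category (Jasso).  n-kernels, epimorphisms and the axiom
   (A2^op) are expressed via the opposite category: an n-kernel of f in C
   is exactly an n-cokernel of f in C^op (with the sequence reversed),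
   an epimorphism is a monomorphism of C^op, and n-exactness is self-dual. *)
Definition n_abelian (n : nat) (C : precat) : Prop :=
  [/\ is_additive C, idempotent_complete C,
      has_ncokernels C n /\ has_ncokernels (opcat C) n &
      mono_ncoker_exact C n /\ mono_ncoker_exact (opcat C) n].

Record addfunctor (C : precat) := AddFunctor {
  Fob : Ob C -> zmodType;
  Fmap : forall A B : Ob C, Hom C A B -> Fob A -> Fob B;
  Fmap_id : forall A (x : Fob A), Fmap A A (idm A) x = x;
  Fmap_comp : forall A B D (f : Hom C A B) (g : Hom C B D) (x : Fob A),
      Fmap A D (comp f g) x = Fmap B D g (Fmap A B f x);
  Fmap_hom : forall A B (f : Hom C A B) (x y : Fob A),
      Fmap A B f (x + y) = Fmap A B f x + Fmap A B f y;
  Fmap_add : forall A B (f g : Hom C A B) (x : Fob A),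
      Fmap A B (f + g) x = Fmap A B f x + Fmap A B g x
}.
Arguments Fmap {C} _ {A B} _ _.
Arguments Fob {C} _ _.

Record nattrans {C : precat} (F G : addfunctor C) := NatTrans {
  ntc : forall A : Ob C, Fob F A -> Fob G A;
  ntc_hom : forall A (x y : Fob F A), ntc A (x + y) = ntc A x + ntc A y;
  ntc_nat : forall A B (f : Hom C A B) (x : Fob F A),
      ntc B (Fmap F f x) = Fmap G f (ntc A x)
}.
Arguments ntc {C F G} _ _ _.

Section FunCat.
Variable C : precat.

Definition nt_mono {F G : addfunctor C} (a : nattrans F G) : Prop :=
  forall (H : addfunctor C) (b b' : nattrans H F),
    (forall A x, ntc a A (ntc b A x) = ntc a A (ntc b' A x)) ->
    forall A x, ntc b A x = ntc b' A x.

Definition nt_nonzero {F G : addfunctor C} (a : nattrans F G) : Prop :=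
  exists A x, ntc a A x != 0.

Definition essential_ext {F G : addfunctor C} (a : nattrans F G) : Prop :=
  nt_mono a /\
  forall (G' : addfunctor C) (b : nattrans G' G), nt_mono b -> nt_nonzero b ->
    exists (A : Ob C) (x : Fob F A) (y : Fob G' A),
      ntc a A x = ntc b A y /\ ntc a A x != 0.

Definition mono_functor (F : addfunctor C) : Prop :=
  forall (A B : Ob C) (f : Hom C A B), is_mono C f -> injective (Fmap F f).
End FunCat.

(* Main.v *)
From HB Require Import structures.
Require Import Defs.
From mathcomp Require Import all_boot all_algebra.
From Stdlib Require Import ClassicalEpsilon.
Import GRing.Theory.
Local Open Scope ring_scope.

Definition pb (P : Prop) : bool := if excluded_middle_informative P then true else false.
Lemma pbE (P : Prop) : pb P <-> P.
Proof. rewrite /pb; case: excluded_middle_informative => //. Qed.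

Section FL.
Variables (C : precat) (F : addfunctor C).
Lemma Fmap0 A B (f : Defs.Hom C A B) : Fmap F f 0 = 0.
Proof. by apply: (addrI (Fmap F f 0)); rewrite -Fmap_hom !addr0. Qed.
Lemma FmapN A B (f : Defs.Hom C A B) y : Fmap F f (- y) = - Fmap F f y.
Proof. by apply: (addrI (Fmap F f y)); rewrite -Fmap_hom !subrr Fmap0. Qed.
Lemma FmapB A B (f : Defs.Hom C A B) y z : Fmap F f (y - z) = Fmap F f y - Fmap F f z.
Proof. by rewrite Fmap_hom FmapN. Qed.
Lemma Fmap0f A B (y : Fob F A) : Fmap F (0 : Defs.Hom C A B) y = 0.
Proof. by apply: (addrI (Fmap F (0 : Defs.Hom C A B) y)); rewrite -Fmap_add !addr0. Qed.
Lemma FmapNf A B (f : Defs.Hom C A B) y : Fmap F (- f) y = - Fmap F f y.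
Proof. by apply: (addrI (Fmap F f y)); rewrite -Fmap_add !subrr Fmap0f. Qed.
Lemma FmapBf A B (f g : Defs.Hom C A B) y : Fmap F (f - g) y = Fmap F f y - Fmap F g y.
Proof. by rewrite Fmap_add FmapNf. Qed.
End FL.

Section Gen.
Variables (C : precat) (E : addfunctor C) (A : Ob C) (x : Fob E A).
Section GenX.
Variable X : Ob C.
Definition genP : pred (Fob E X) := fun y => pb (exists g : Defs.Hom C A X, y = Fmap E g x).
Lemma genP_zmod : zmod_closed genP.
Proof. split.
 - by apply/pbE; exists 0; rewrite Fmap0f.
 - by move=> u v /pbE[g ->] /pbE[h ->]; apply/pbE; exists (g - h); rewrite FmapBf.
Qed.
HB.instance Definition _ := GRing.isZmodClosed.Build (Fob E X) genP genP_zmod.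
Record genT := GenT { gval : Fob E X; gvalP : gval \in genP }.
HB.instance Definition _ := [isSub for gval].
HB.instance Definition _ := [Choice of genT by <:].
HB.instance Definition _ := [SubChoice_isSubZmodule of genT by <:].
Lemma gvalD (a b : genT) : gval (a + b) = gval a + gval b.
Proof. first [by [] | exact: (raddfD (val : genT -> _))]. Qed.
End GenX.
Arguments gval {X}.
Arguments GenT {X}.

Lemma genmapP X Y (g : Defs.Hom C X Y) (y : genT X) : Fmap E g (gval y) \in genP Y.
Proof. case: y => y /= Py; have [h ->] := (pbE _).1 Py; apply/pbE; exists (Defs.comp h g); by rewrite Fmap_comp. Qed.
Definition genF : addfunctor C.
Proof.
refine (@AddFunctor C genT
  (fun X Y g (y : genT X) => @GenT Y (Fmap E g (gval y)) (@genmapP X Y g y)) _ _ _ _).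
- by move=> X [y Py]; apply: val_inj; rewrite /= Fmap_id.
- by move=> X Y Z f g [y Py]; apply: val_inj; rewrite /= Fmap_comp.
- by move=> X Y f a b; apply: val_inj; rewrite /= ?gvalD Fmap_hom.
- by move=> X Y f g a; apply: val_inj; rewrite /= ?gvalD /= Fmap_add.
Defined.

Definition genI : nattrans genF E.
Proof.
refine (@NatTrans C genF E (fun X (y : genT X) => gval y) _ _).
- by move=> X a b; rewrite gvalD.
- by [].
Defined.

Lemma genI_mono : nt_mono C genI.
Proof. by move=> H b b' Hb X y; apply: val_inj; apply: Hb. Qed.

Lemma genI_nz : x != 0 -> nt_nonzero C genI.
Proof.
move=> nx.
have Px : x \in genP A by apply/pbE; exists (Defs.idm A); rewrite Fmap_id.
by exists A, (@GenT A x Px).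
Qed.

Lemma genI_img X (y : genT X) : exists g, gval y = Fmap E g x.
Proof. by case: y => y /= Py; have := (pbE _).1 Py. Qed.
End Gen.

Section CL.
Variable C : precat.
Lemma comp0m A B D (g : Defs.Hom C B D) : Defs.comp (0 : Defs.Hom C A B) g = 0.
Proof. by apply: (addrI (Defs.comp (0 : Defs.Hom C A B) g)); rewrite -Defs.compDl !addr0. Qed.
Lemma compm0 A B D (f : Defs.Hom C A B) : Defs.comp f (0 : Defs.Hom C B D) = 0.
Proof. by apply: (addrI (Defs.comp f (0 : Defs.Hom C B D))); rewrite -Defs.compDr !addr0. Qed.
Lemma compNm A B D (f : Defs.Hom C A B) (g : Defs.Hom C B D) : Defs.comp (- f) g = - Defs.comp f g.
Proof. by apply: (addrI (Defs.comp f g)); rewrite -Defs.compDl !subrr comp0m. Qed.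
Lemma compmN A B D (f : Defs.Hom C A B) (g : Defs.Hom C B D) : Defs.comp f (- g) = - Defs.comp f g.
Proof. by apply: (addrI (Defs.comp f g)); rewrite -Defs.compDr !subrr compm0. Qed.
Lemma compBl A B D (f f' : Defs.Hom C A B) (g : Defs.Hom C B D) :
  Defs.comp (f - f') g = Defs.comp f g - Defs.comp f' g.
Proof. by rewrite Defs.compDl compNm. Qed.
Lemma compBr A B D (f : Defs.Hom C A B) (g g' : Defs.Hom C B D) :
  Defs.comp f (g - g') = Defs.comp f g - Defs.comp f g'.
Proof. by rewrite Defs.compDr compmN. Qed.
End CL.

(* Yoneda: a mono natural transformation is componentwise injective. *)
Section Yon.
Variables (C : precat) (A : Ob C).
Definition yonF : addfunctor C.
Proof.
refine (@AddFunctor C (fun X => Defs.Hom C A X) (fun X Y g h => Defs.comp h g) _ _ _ _).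
- by move=> X h; rewrite Defs.compm1.
- by move=> X Y Z f g h; rewrite Defs.compA.
- by move=> X Y f a b; rewrite Defs.compDl.
- by move=> X Y f g a; rewrite Defs.compDr.
Defined.
Definition yonT (F : addfunctor C) (m : Fob F A) : nattrans yonF F.
Proof.
refine (@NatTrans C yonF F (fun X h => Fmap F h m) _ _).
- by move=> X a b; rewrite Fmap_add.
- by move=> X Y f h; rewrite /= Fmap_comp.
Defined.
End Yon.

Lemma nt_mono_inj (C : precat) (F G : addfunctor C) (a : nattrans F G) :
  nt_mono C a -> forall A, injective (ntc a A).
Proof.
move=> Ha A m1 m2 e.
have := Ha _ (@yonT C A F m1) (@yonT C A F m2) _ A (Defs.idm A).
rewrite /= !Fmap_id; apply => X h /=.
by rewrite !ntc_nat e.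
Qed.

Lemma ntc0 (C : precat) (F G : addfunctor C) (a : nattrans F G) A : ntc a A 0 = 0.
Proof. by apply: (addrI (ntc a A 0)); rewrite -ntc_hom !addr0. Qed.

Lemma mono_pushout n (Hn : (0 < n)%N) (C : precat) (HC : n_abelian n C)
   (A B X : Ob C) (f : Defs.Hom C A B) (g : Defs.Hom C A X) : is_mono C f ->
  exists (Y : Ob C) (f' : Defs.Hom C X Y) (g' : Defs.Hom C B Y),
    is_mono C f' /\ Defs.comp g f' = Defs.comp f g'.
Proof.
move=> mf; case: HC => [[_ Hbip] _ [Hcok _] [Hmex _]].
have [P [i1 [i2 [p1 [p2 [e11 e22 e12 e21 _]]]]]] := Hbip B X.
pose h := Defs.comp f i1 - Defs.comp g i2.
have hp1 : Defs.comp h p1 = f.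
  by rewrite /h compBl -!Defs.compA e11 e21 Defs.compm1 compm0 subr0.
have mh : is_mono C h.
  by move=> Z s s' e; apply: mf; rewrite -hp1 !Defs.compA e.
have [Y [e0 [e Hc]]] := Hcok A P h.
have [[Hc0 _] [_ Hk]] := Hmex A P h mh Y e0 e Hc.
have he0 : Defs.comp h e0 = 0 := Hc0 0%N Hn.
exists (Y 0%N), (Defs.comp i2 e0), (Defs.comp i1 e0); split; last first.
  apply/eqP; rewrite eq_sym -subr_eq0 !Defs.compA -compBl.
  by apply/eqP.
move=> Z u v euv; apply/eqP; rewrite -subr_eq0; apply/eqP.
set t := u - v.
have te : Defs.comp (Defs.comp t i2) e0 = 0.
  by rewrite -Defs.compA /t compBl euv subrr.
have [s Hs] := (Hk Z).2 0%N Hn (Defs.comp t i2) te.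
have s0 : s = 0.
  apply: mf; rewrite comp0m -hp1 Defs.compA.
  have : Defs.comp (Defs.comp t i2) p1 = 0 by rewrite -Defs.compA e21 compm0.
  by rewrite Hs.
have t0 : Defs.comp t i2 = 0 by rewrite Hs s0 comp0m.
by rewrite -[t]Defs.compm1 -e22 Defs.compA t0 comp0m.
Qed.

Theorem mainTheorem4 (n : nat) (Hn : (0 < n)%N) (C : precat)
    (HC : n_abelian n C) (M E : addfunctor C) (i : nattrans M E) :
  mono_functor C M -> essential_ext C i -> mono_functor C E.
Proof.
move=> HM [Hi Hess] A B f mf x1 x2 e.
apply/eqP; rewrite -subr_eq0; apply/eqP.
set x := x1 - x2.
have fx : Fmap E f x = 0 by rewrite /x FmapB e subrr.
case: (eqVneq x 0) => // nx.
have [A' [m [y [ey nz]]]] :=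
  Hess _ (@genI C E A x) (@genI_mono C E A x) (@genI_nz C E A x nx).
have [g eg] := @genI_img C E A x A' y.
have [Y [f' [g' [mf' sq]]]] := @mono_pushout n Hn C HC A B A' f g mf.
have iinj := @nt_mono_inj C M E i Hi.
have : M.(Fmap) f' m = 0.
  apply: (iinj Y); rewrite ntc0 ntc_nat ey /=.
  by rewrite eg -Fmap_comp sq Fmap_comp fx Fmap0.
move=> m0; have : m = 0 by apply: (HM _ _ _ mf'); rewrite m0 Fmap0.
by move=> mz; move: nz; rewrite mz ntc0 eqxx.
Qed.
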